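(* Let $t\ge 1$, $n\ge 1$, $q\ge 1$ be integers and $u=\lfloor(\frac{t}{2}+1)^2\rfloor$. An $(n,q)$ code $\mathcal{C}$ is a $t$-MIPPC$(n,q)$ if and only if there is no minimal forbidden configuration in $\mathcal{C}$ of size at most $u$.
   Context: Let $Q$ be an alphabet with $|Q|=q$; an $(n,q)$ code is a subset $\mathcal{C}\subseteq Q^n$. For $\mathcal{S}\subseteq Q^n$ and $1\le i\le n$ let $\mathcal{S}(i)=\{\mathbf{c}(i):\mathbf{c}\in\mathcal{S}\}$ and $\mathrm{desc}(\mathcal{S})=\mathcal{S}(1)\times\cdots\times\mathcal{S}(n)$. $\mathcal{C}$ is a $t$-MIPPC$(n,q)$ if for every nonempty $\mathcal{C}'\subseteq\mathcal{C}$ with $|\mathcal{C}'|\le t$, $\bigcap_{\mathcal{S}\in S_t(\mathcal{C}')}\mathcal{S}\neq\emptyset$, where $S_t(\mathcal{C}')=\{\mathcal{S}\subseteq\mathcal{C}:|\mathcal{S}|\le t,\ \mathrm{desc}(\mathcal{S})=\mathrm{desc}(\mathcal{C}')\}$. A configuration in $\mathcal{C}$ is a collection $\mathcal{F}=\{\mathcal{F}_1,\dots,\mathcal{F}_m\}$ of nonempty subsets $\mathcal{F}_i\subseteq\mathcal{C}$ with $|\mathcal{F}_i|\le t$ and $\bigcap_i\mathcal{F}_i=\emptyset$; it is minimal if $\bigcap_{j\neq i}\mathcal{F}_j\neq\emptyset$ for all $i$; its size is $|\bigcup_i\mathcal{F}_i|$. A (minimal) forbidden configuration in $\mathcal{C}$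 is a (minimal) configuration with $\mathrm{desc}(\mathcal{F}_1)=\cdots=\mathrm{desc}(\mathcal{F}_m)$, i.e. $\mathcal{F}_1(i)=\cdots=\mathcal{F}_m(i)$ for every $1\le i\le n$. *)

(* Defs.v *)
From mathcomp Require Import all_boot.
Set Implicit Arguments. Unset Strict Implicit. Unset Printing Implicit Defensive.

Section Codes.
Variables (Q : finType) (n : nat).

Local Notation word := {ffun 'I_n -> Q}.

Definition coord (S : {set word}) (i : 'I_n) : {set Q} := [set (c : word) i | c in S].

Definition desc (S : {set word}) : {set word} :=
  [set w : word | [forall i, w i \in coord S i]].

Definition St (t : nat) (C C' : {set word}) : {set {set word}} :=
  [set S : {set word} | [&& S \subset C, #|S| <= t & desc S == desc C']].

Definition is_MIPPC (t : nat) (C : {set word}) : Prop :=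
  forall C' : {set word}, C' \subset C -> 0 < #|C'| -> #|C'| <= t ->
    \bigcap_(S in St t C C') S != set0.

Definition configuration (t : nat) (C : {set word}) (F : {set {set word}}) : Prop :=
  (forall Fi, Fi \in F -> [/\ Fi != set0, Fi \subset C & #|Fi| <= t]) /\
  \bigcap_(G in F) G = set0.

Definition minimal_configuration t C F : Prop :=
  configuration t C F /\
  forall Fi, Fi \in F -> \bigcap_(G in F :\ Fi) G != set0.

Definition config_size (F : {set {set word}}) : nat := #|\bigcup_(G in F) G|.

Definition forbidden (F : {set {set word}}) : Prop :=
  forall G H, G \in F -> H \in F -> desc G = desc H.

Definition minimal_forbidden_configuration t C F : Prop :=
  minimal_configuration t C F /\ forbidden F.

End Codes.

(* Main.v *)
Require Import Defs.
From mathcomp Require Import all_boot.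
From mathcomp Require Import zify.

Lemma arith_u m t : 0 < m -> m.-1 <= t -> (m + m * (t - m.-1)) * 4 <= (t+2)^2.
Proof.
move=> h1 h2.
have e0 : (t - m.-1).+1 = t + 2 - m by lia.
have e2 : t + 2 = m + (t + 2 - m) by lia.
by rewrite -mulnS e0 mulnC {2}e2; exact: (nat_AGM2 _ _).1.
Qed.

Lemma card_bigcup_le (T I : finType) (P : {set I}) (A : I -> {set T}) :
  #|\bigcup_(i in P) A i| <= \sum_(i in P) #|A i|.
Proof.
apply: (big_ind2 (fun (U : {set T}) s => #|U| <= s)) => //=.
  by rewrite cards0.
move=> U1 s1 U2 s2 h1 h2; apply: leq_trans (leq_card_setU _ _) _; exact: leq_add.
Qed.

Lemma minconf_size (T : finType) (t : nat) (F : {set {set T}}) :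
  (forall G, G \in F -> #|G| <= t) -> \bigcap_(G in F) G = set0 ->
  (forall G, G \in F -> \bigcap_(H in F :\ G) H != set0) ->
  #|\bigcup_(G in F) G| <= (t + 2) ^ 2 %/ 4.
Proof.
move=> Ht Hcap Hmin.
have [->|[G0 G0F]] := set_0Vmem F.
  by rewrite big_set0 cards0.
have /set0Pn [w0 _] := Hmin _ G0F.
pose x G := odflt w0 [pick w in \bigcap_(H in F :\ G) H].
have xP G : G \in F -> x G \in \bigcap_(H in F :\ G) H.
  move=> GF; rewrite /x; case: pickP => [w -> //|/= none].
  have /set0Pn [w wIn] := Hmin _ GF; by move: (none w); rewrite /= wIn.
have xin G H : G \in F -> H \in F -> H != G -> x G \in H.
  by move=> GF HF HG; move/bigcapP: (xP G GF); apply; rewrite !inE HG.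
have xout G : G \in F -> x G \notin G.
  move=> GF; apply/negP => xG.
  have : x G \in \bigcap_(H in F) H.
    apply/bigcapP => H HF; case: (eqVneq H G) => [->//|HG]; exact: xin.
  by rewrite Hcap inE.
have xinj : {in F &, injective x}.
  move=> G H GF HF eqx; case: (eqVneq G H) => [//|GH]; exfalso.
  have := xin G H GF HF; rewrite eq_sym GH => /(_ isT); rewrite eqx.
  by move/negP: (xout H HF).
have cardX : #|x @: F| = #|F| by rewrite card_in_imset.
have m_gt0 : 0 < #|F| by apply/card_gt0P; exists G0.
have inter G : G \in F -> #|F|.-1 <= #|G :&: (x @: F)|.
  move=> GF; have <- : #|x @: (F :\ G)| = #|F|.-1.
    rewrite card_in_imset; first by rewrite (cardsD1 G F) GF.
    move=> a b /setD1P[_ aF] /setD1P[_ bF]; exact: xinj.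
  apply: subset_leq_card; apply/subsetP => _ /imsetP[H /setD1P[HG HF] ->].
  by rewrite inE (xin H G HF GF) 1?eq_sym //; apply/imsetP; exists H.
have mt : #|F|.-1 <= t.
  apply: leq_trans (inter _ G0F) _; apply: leq_trans (Ht _ G0F).
  apply: subset_leq_card; exact: subsetIl.
have diff G : G \in F -> #|G :\: (x @: F)| <= t - #|F|.-1.
  by move=> GF; rewrite cardsD; apply: leq_sub (Ht _ GF) (inter _ GF).
have sub : \bigcup_(G in F) G \subset (x @: F) :|: \bigcup_(G in F) (G :\: (x @: F)).
  apply/subsetP => w /bigcupP[G GF wG]; rewrite inE; case: (boolP (w \in x @: F)) => //= wX.
  by apply/bigcupP; exists G => //; rewrite inE wX wG.
apply: leq_trans (subset_leq_card sub) _.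
apply: leq_trans (leq_card_setU _ _) _; rewrite cardX.
apply: leq_trans (leq_add (leqnn #|F|) (card_bigcup_le _ _ F (fun G => G :\: x @: F))) _.
apply: leq_trans (leq_add (leqnn #|F|) (@leq_sum _ _ (fun G => G \in F) (fun G => #|G :\: x @: F|) (fun _ => t - #|F|.-1) diff)) _.
by rewrite sum_nat_const leq_divRL //; apply: arith_u.
Qed.

(* u = floor((t/2 + 1)^2) = floor((t+2)^2 / 4) = (t+2)^2 %/ 4 *)
Theorem corollary4 (t n q : nat) (Q : finType) (C : {set {ffun 'I_n -> Q}}) :
  1 <= t -> 1 <= n -> 1 <= q -> #|Q| = q ->
  is_MIPPC t C <->
  ~ (exists F : {set {set {ffun 'I_n -> Q}}},
        minimal_forbidden_configuration t C F /\
        config_size F <= (t + 2) ^ 2 %/ 4).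
Proof.
move=> t1 n1 q1 cQ.
have /card_gt0P [q0 _] : 0 < #|Q| by rewrite cQ.
pose i0 : 'I_n := Ordinal n1.
split.
  move=> HM [F [[[[Hel Hcap] Hmin] Hforb] _]].
  have [F0|[G GF]] := set_0Vmem F.
    move: Hcap; rewrite F0 big_set0 => /setP /(_ [ffun => q0]).
    by rewrite !inE.
  have [Gn GC Gt] := Hel G GF.
  have := HM G GC; rewrite card_gt0 Gn Gt => /(_ isT isT).
  apply/negP; rewrite negbK; apply/eqP/setP => w; rewrite inE.
  apply/negP => /bigcapP Hw.
  have : w \in \bigcap_(H in F) H.
    apply/bigcapP => H HF; apply: Hw; rewrite inE.
    by have [_ HC Ht'] := Hel H HF; rewrite HC Ht' (Hforb H G HF GF) eqxx.
  by rewrite Hcap inE.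
move=> Hno C' C'C C'0 C't; apply/negP => /eqP Hcap; apply: Hno.
pose P (F : {set {set {ffun 'I_n -> Q}}}) :=
  (F \subset St t C C') && (\bigcap_(S in F) S == set0).
have PSt : P (St t C C') by rewrite /P subxx Hcap eqxx.
have [F /minsetP [/andP [FSt /eqP FCap] Fmin] _] := minset_exists PSt.
have inSt G : G \in F -> [&& G \subset C, #|G| <= t & desc G == desc C'].
  by move=> GF; move/subsetP: FSt => /(_ G GF); rewrite inE.
have descC' : desc C' != set0.
  have /card_gt0P [c cC'] := C'0.
  apply/set0Pn; exists c; rewrite inE; apply/forallP => i.
  by apply/imsetP; exists c.
have Hmin : minimal_configuration t C F.
  split; first split => //.
    move=> G GF; have /and3P [GC Gt /eqP Gd] := inSt G GF.
    split => //; apply/negP => /eqP G0.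
    move: descC'; rewrite -Gd G0; apply/negP; rewrite negbK; apply/eqP/setP => w.
    rewrite !inE; apply/negP => /forallP /(_ i0).
    by rewrite /coord imset0 inE.
  move=> G GF; apply/negP => /eqP cap0.
  have := Fmin (F :\ G); rewrite /P cap0 eqxx andbT.
  have sub : F :\ G \subset F by apply: subsetDl.
  move=> /(_ (subset_trans sub FSt) sub) /setP /(_ G).
  by rewrite !inE eqxx GF.
exists F; split; first split => //.
  move=> G H GF HF.
  have /and3P [_ _ /eqP ->] := inSt G GF.
  by have /and3P [_ _ /eqP ->] := inSt H HF.
case: Hmin => [[Hel Hc] Hm].
apply: minconf_size => //.
by move=> G GF; have [] := Hel G GF.
Qed.
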